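(* Let $a\ge b\ge1$ be integers and define $c_j,d_j$ ($j\in\mathbb Z_+$) by $c_0=d_0=0$, $c_1=d_1=1$, $c_{k+2}+c_k=a d_{k+1}$, $d_{k+2}+d_k=b c_{k+1}$. Then both inequalities $$bc_{k+1}^2+ad_k^2-abc_{k+1}d_k+2ad_k-abc_{k+1}+a\le0,$$ $$bc_k^2+ad_{k+1}^2-abd_{k+1}c_k-abd_{k+1}+2bc_k+b\le0$$ hold (1) for all $k\ge0$ if $b\ge2$, and (2) for all $k\ge1$ if $b=1$ and $a\ge5$.
   Context: $\mathbb Z_+=\{0,1,2,\dots\}$. *)

(* Defs.v *)
From mathcomp Require Import all_boot all_order all_algebra.
Set Implicit Arguments. Unset Strict Implicit. Unset Printing Implicit Defensive.
Import Order.TTheory GRing.Theory Num.Theory.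
Local Open Scope ring_scope.

(* cd_pair a b k = (c_k, d_k, c_{k+1}, d_{k+1}) where
   c_0 = d_0 = 0, c_1 = d_1 = 1,
   c_{k+2} = a d_{k+1} - c_k,  d_{k+2} = b c_{k+1} - d_k. *)
Fixpoint cd_quad (a b : int) (k : nat) : int * int * int * int :=
  match k with
  | 0%N => (0, 0, 1, 1)
  | k'.+1 =>
      let '(c0, d0, c1, d1) := cd_quad a b k' in
      (c1, d1, a * d1 - c0, b * c1 - d0)
  end.

Definition cseq (a b : int) (k : nat) : int := (cd_quad a b k).1.1.1.
Definition dseq (a b : int) (k : nat) : int := (cd_quad a b k).1.1.2.

Lemma cseq_rec a b k : cseq a b k.+2 + cseq a b k = a * dseq a b k.+1.
Proof.
rewrite /cseq /dseq /=; case: (cd_quad a b k) => [[[c0 d0] c1] d1] /=.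
by rewrite subrK.
Qed.
Lemma dseq_rec a b k : dseq a b k.+2 + dseq a b k = b * cseq a b k.+1.
Proof.
rewrite /cseq /dseq /=; case: (cd_quad a b k) => [[[c0 d0] c1] d1] /=.
by rewrite subrK.
Qed.

Definition ineq1 (a b : int) (k : nat) : Prop :=
  let c := cseq a b in let d := dseq a b in
  b * c k.+1 ^+ 2 + a * d k ^+ 2 - a * b * c k.+1 * d k + 2 * a * d k
    - a * b * c k.+1 + a <= 0.

Definition ineq2 (a b : int) (k : nat) : Prop :=
  let c := cseq a b in let d := dseq a b in
  b * c k ^+ 2 + a * d k.+1 ^+ 2 - a * b * d k.+1 * c k - a * b * d k.+1
    + 2 * b * c k + b <= 0.

(* Main.v *)
Require Import Defs.
From mathcomp Require Import all_boot all_order all_algebra.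
From mathcomp Require Import zify ring.
Import Order.TTheory GRing.Theory Num.Theory.
Local Open Scope ring_scope.

Section S.
Variables a b : int.
Local Notation c := (cseq a b).
Local Notation d := (dseq a b).

Lemma crec k : c k.+2 = a * d k.+1 - c k.
Proof. by rewrite -cseq_rec addrK. Qed.
Lemma drec k : d k.+2 = b * c k.+1 - d k.
Proof. by rewrite -dseq_rec addrK. Qed.

Definition H1 k := b * c k.+1 ^+ 2 + a * d k ^+ 2 - a*b*c k.+1 * d k.
Definition H2 k := b * c k ^+2 + a * d k.+1 ^+2 - a*b*d k.+1 * c k.
Definition U k := b * c k.+1 - 2 * d k.
Definition V k := a * d k.+1 - 2 * c k.

Lemma c0 : c 0 = 0. Proof. by []. Qed.
Lemma d0 : d 0 = 0. Proof. by []. Qed.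
Lemma c1 : c 1 = 1. Proof. by []. Qed.
Lemma d1 : d 1 = 1. Proof. by []. Qed.

Lemma Hval k : H1 k = (if odd k then a else b) /\ H2 k = (if odd k then b else a).
Proof.
elim: k => [|k [IH1 IH2]].
  by rewrite /H1 /H2 c0 d0 c1 d1; split; ring.
have -> : H1 k.+1 = H2 k by rewrite /H1 /H2 crec; ring.
have -> : H2 k.+1 = H1 k by rewrite /H1 /H2 drec; ring.
by rewrite IH1 IH2 /=; case: (odd k).
Qed.

Lemma UU k : U k.+2 = U k + (a*b - 4) * d k.+2.
Proof. by rewrite /U (crec k.+1) (drec k); ring. Qed.
Lemma VV k : V k.+2 = V k + (a*b - 4) * c k.+2.
Proof. by rewrite /V (drec k.+1) (crec k); ring. Qed.
Lemma dU k : d k.+2 = d k + U k.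
Proof. by rewrite /U drec; ring. Qed.
Lemma cV k : c k.+2 = c k + V k.
Proof. by rewrite /V crec; ring. Qed.

Lemma U0 : U 0 = b. Proof. by rewrite /U c1 d0; ring. Qed.
Lemma V0 : V 0 = a. Proof. by rewrite /V d1 c0; ring. Qed.
Lemma U1 : U 1 = a * b - 2.
Proof. by rewrite /U crec c0 d1; ring. Qed.
Lemma V1 : V 1 = a * b - 2.
Proof. by rewrite /V drec d0 c1; ring. Qed.

Hypothesis hb : 1 <= b.
Hypothesis hab : b <= a.
Hypothesis h4 : 4 <= a * b.

Definition P k := 0 <= d k /\ 0 <= c k /\ 0 <= U k /\ 0 <= V k.

Lemma Pall k : P k /\ P k.+1.
Proof.
elim: k => [|k [IH1 IH2]].
  rewrite /P d0 c0 d1 c1 U0 V0 U1 V1; split; lia.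
split=> //.
move: IH1; rewrite /P UU VV dU cV => -[? [? [? ?]]].
have ? : 0 <= d k + U k by lia.
have ? : 0 <= c k + V k by lia.
have ? : 0 <= (a*b-4) * (d k + U k) by apply: mulr_ge0; lia.
have ? : 0 <= (a*b-4) * (c k + V k) by apply: mulr_ge0; lia.
lia.
Qed.

Lemma monoU j n : U j <= U (j + n.*2)%N.
Proof.
elim: n => [|n IH]; first by rewrite addn0.
rewrite doubleS !addnS UU; apply: (le_trans IH).
have [[? _] _] := Pall (j + n.*2).+2.
have ? : 0 <= (a*b-4) * d (j + n.*2).+2 by apply: mulr_ge0; lia.
lia.
Qed.
Lemma monoV j n : V j <= V (j + n.*2)%N.
Proof.
elim: n => [|n IH]; first by rewrite addn0.
rewrite doubleS !addnS VV; apply: (le_trans IH).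
have [[_ [? _]] _] := Pall (j + n.*2).+2.
have ? : 0 <= (a*b-4) * c (j + n.*2).+2 by apply: mulr_ge0; lia.
lia.
Qed.

Lemma ineq1E k : ineq1 a b k <-> H1 k + a * (1 - U k) <= 0.
Proof.
rewrite /ineq1 /H1 /U.
have -> : b * c k.+1 ^+ 2 + a * d k ^+ 2 - a * b * c k.+1 * d k + 2 * a * d k
    - a * b * c k.+1 + a = b * c k.+1 ^+ 2 + a * d k ^+ 2 - a * b * c k.+1 * d k +
   a * (1 - (b * c k.+1 - 2 * d k)) by ring.
by [].
Qed.
Lemma ineq2E k : ineq2 a b k <-> H2 k + b * (1 - V k) <= 0.
Proof.
rewrite /ineq2 /H2 /V.
have -> : b * c k ^+ 2 + a * d k.+1 ^+ 2 - a * b * d k.+1 * c k - a * b * d k.+1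
    + 2 * b * c k + b = b * c k ^+ 2 + a * d k.+1 ^+ 2 - a * b * d k.+1 * c k +
   b * (1 - (a * d k.+1 - 2 * c k)) by ring.
by [].
Qed.

Lemma fin k : 2 <= U k -> (odd k -> 2 <= V k) -> (~~ odd k -> a <= b * (V k - 1)) ->
  ineq1 a b k /\ ineq2 a b k.
Proof.
move=> hU hVo hVe; rewrite ineq1E ineq2E; have [-> ->] := Hval k.
have ? : 2 * a <= a * U k by nia.
case: (odd k) hVo hVe => hVo hVe.
  have := hVo isT => ?.
  have ? : 2 * b <= b * V k by nia.
  split; nia.
have := hVe isT => ?. split; nia.
Qed.

End S.

Theorem lemma4p4 (a b : int) (hb1 : 1 <= b) (hab : b <= a) :
  (2 <= b -> forall k : nat, ineq1 a b k /\ ineq2 a b k) /\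
  (b = 1 -> 5 <= a -> forall k : nat, (1 <= k)%N -> ineq1 a b k /\ ineq2 a b k).
Proof.
split.
  move=> hb2 k.
  have h4 : 4 <= a * b by nia.
  have E := odd_double_half k.
  have hU := @monoU a b hb1 hab h4 (odd k) k./2.
  have hV := @monoV a b hb1 hab h4 (odd k) k./2.
  rewrite E in hU hV.
  apply: fin => //.
  - by case: (odd k) hU; rewrite /= ?U0 ?U1 => ?; nia.
  - by move=> ho; rewrite ho /= V1 in hV; nia.
  - by move=> /negbTE ho; rewrite ho /= V0 in hV; nia.
move=> hb1' ha5 k hk; subst b.
have h4 : 4 <= a * 1 by lia.
have ha1 : (1 : int) <= 1 by [].
have hab' : (1 : int) <= a by lia.
have d2 : dseq a 1 2 = 1 by rewrite drec c1 d0; ring.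
have c2 : cseq a 1 2 = a by rewrite crec d1 c0; ring.
have U2 : U a 1 2 = a - 3 by rewrite (UU a 1 0) U0 d2; ring.
have V2 : V a 1 2 = a + (a - 4) * a by rewrite (VV a 1 0) V0 c2; ring.
case ho: (odd k).
  have Ek : k = (1 + (k./2).*2)%N by rewrite -[in LHS](odd_double_half k) ho.
  have hU := @monoU a 1 ha1 hab' h4 1 k./2.
  have hV := @monoV a 1 ha1 hab' h4 1 k./2.
  rewrite -Ek U1 in hU; rewrite -Ek V1 in hV.
  apply: fin => //; [nia | by move=> _; nia | by rewrite ho].
have Ek0 : k = ((k./2).*2)%N by rewrite -[in LHS](odd_double_half k) ho.
case Em: k./2 => [|m]; first by move: hk; rewrite Ek0 Em.
have Ek : k = (2 + m.*2)%N by rewrite Ek0 Em doubleS.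
have hU := @monoU a 1 ha1 hab' h4 2 m.
have hV := @monoV a 1 ha1 hab' h4 2 m.
rewrite -Ek U2 in hU; rewrite -Ek V2 in hV.
apply: fin => //; [nia | by rewrite ho | by move=> _; nia].
Qed.
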